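(* Let $n\ge 4$ be even. Let the multiplicative group $\Gamma=\mathbb R_{>0}^n$ act on $\mathbb R_{>0}^{E_n}$ by $\lambda\cdot x=(\lambda_i\lambda_j x_{\{i,j\}})_{\{i,j\}\in E_n}$ for $\lambda\in\Gamma$, $x\in\mathbb R_{>0}^{E_n}$. Then every $\Gamma$-invariant subset of $\mathbb R_{>0}^{E_n}$ is fiber-invariant for the map $\varphi:\mathbb R_{>0}^{E_n}\to\mathbb R_{>0}^{\mathcal M_n}$, $\varphi(x)=(x_M)_{M\in\mathcal M_n}$, where $x_M=\prod_{e\in M}x_e$.
   Context: $E_n$ denotes the set of edges of the complete graph on vertex set $[n]=\{1,\dots,n\}$ (i.e. the 2-element subsets of $[n]$), and $\mathcal M_n$ denotes the set of perfect matchings of this complete graph. For a map $f:X\to Y$, a subset $D\subseteq X$ is fiber-invariant for $f$ if for every $y\in f(D)$ the whole fiber $f^{-1}(y)$ is contained in $D$. *)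

(* Defs.v *)
From HB Require Import structures.
From mathcomp Require Import all_boot all_order all_algebra.
From mathcomp Require Import reals.
Set Implicit Arguments. Unset Strict Implicit. Unset Printing Implicit Defensive.
Import Order.TTheory GRing.Theory Num.Theory.
Local Open Scope ring_scope.

Definition edge (n : nat) := {e : {set 'I_n} | #|e| == 2%N}.

Definition perfect_matching (n : nat) (M : {set edge n}) : bool :=
  [forall v : 'I_n, #|[set e in M | v \in val e]| == 1%N].

Definition posvec (R : realType) (T : finType) (x : {ffun T -> R}) : Prop :=
  forall t, 0 < x t.

Definition gact (R : realType) (n : nat) (lam : {ffun 'I_n -> R})
  (x : {ffun edge n -> R}) : {ffun edge n -> R} :=
  [ffun e : edge n => (\prod_(i in val e) lam i) * x e].

Definition xM (R : realType) (n : nat) (x : {ffun edge n -> R})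
  (M : {set edge n}) : R := \prod_(e in M) x e.

Definition gamma_invariant (R : realType) (n : nat)
  (D : {ffun edge n -> R} -> Prop) : Prop :=
  forall lam : {ffun 'I_n -> R}, posvec lam ->
  forall x, D x -> D (gact lam x).

(* D is fiber-invariant for phi : R_{>0}^{E_n} -> R_{>0}^{M_n}, phi x = (x_M)_M:
   every y in phi(D) has its whole fiber (within R_{>0}^{E_n}) inside D. *)
Definition phi_fiber_invariant (R : realType) (n : nat)
  (D : {ffun edge n -> R} -> Prop) : Prop :=
  forall x x' : {ffun edge n -> R}, D x -> posvec x' ->
  (forall M : {set edge n}, perfect_matching M -> xM x' M = xM x M) ->
  D x'.

(* Main.v *)
Require Import Defs.
From HB Require Import structures.
From mathcomp Require Import all_boot all_order all_algebra.
From mathcomp Require Import reals.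
From mathcomp Require Import perm ring lra.
Set Implicit Arguments. Unset Strict Implicit. Unset Printing Implicit Defensive.
Import Order.TTheory GRing.Theory Num.Theory.
Local Open Scope ring_scope.

Definition invol (n : nat) (p : 'I_n -> 'I_n) :=
  (forall v, p (p v) = v) /\ (forall v, p v != v).

Definition Mp (n : nat) (p : 'I_n -> 'I_n) : {set edge n} :=
  [set e : edge n | [exists v, val e == [set v; p v]]].

Lemma edge_ex (n : nat) (a b : 'I_n) : a != b -> exists e : edge n, val e = [set a; b].
Proof.
move=> ab.
have h : #|[set a; b]| == 2%N by rewrite cards2 ab.
by exists (exist _ [set a; b] h).
Qed.

Lemma perfect_Mp (n : nat) (p : 'I_n -> 'I_n) : invol p -> perfect_matching (Mp p).
Proof.
move=> [pp pn]; apply/forallP => v.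
have [e0 He0] := edge_ex (negbT (introF eqP (fun h => (negP (pn v)) (introT eqP (esym h))))).
suff -> : [set e in Mp p | v \in val e] = [set e0] by rewrite cards1.
apply/setP => e; rewrite !inE; apply/andP/eqP.
- case => /existsP [w /eqP Hw] Hv; apply: val_inj; rewrite He0 Hw.
  move: Hv; rewrite Hw !inE => /orP [/eqP->|/eqP->] //.
  by rewrite pp setUC.
- move=> ->; split; last by rewrite He0 !inE eqxx.
  by apply/existsP; exists v; rewrite He0.
Qed.

Lemma invol_cj (n : nat) (p : 'I_n -> 'I_n) (x y : 'I_n) :
  invol p -> invol (fun v => tperm x y (p (tperm x y v))).
Proof.
move=> [pp pn]; split => v; first by rewrite tpermK pp tpermK.
apply/negP => /eqP h.
have : p (tperm x y v) = tperm x y v by rewrite -{2}h tpermK.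
by move/eqP; rewrite (negbTE (pn _)).
Qed.

Lemma invol_base (n : nat) : ~~ odd n -> (0 < n)%N -> exists p : 'I_n -> 'I_n, invol p.
Proof.
case: n => [//|m] /= om _.
pose f k := if odd k then k.-1 else k.+1.
have fb : forall k, (k < m.+1)%N -> (f k < m.+1)%N.
  move=> k kl; rewrite /f; case: ifP => ok.
    by apply: leq_ltn_trans kl; apply: leq_pred.
  rewrite ltnS ltn_neqAle -ltnS kl andbT.
  by apply/eqP => km; move: om; rewrite -km ok.
have ff : forall k, f (f k) = k.
  move=> k; rewrite /f; case: k => [|k] //=.
  case ok: (odd k) => /=; first by rewrite ok.
  by rewrite ok.
have fn : forall k, f k != k.
  move=> [|k]; rewrite /f //=; case: (odd k) => /=.
    by rewrite gtn_eqF.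
  by rewrite ltn_eqF.
pose p (v : 'I_m.+1) : 'I_m.+1 := inord (f v).
have pv : forall v, (p v : nat) = f v by move=> v; rewrite inordK // fb.
exists p; split => v.
  by apply: ord_inj; rewrite !pv ff.
by apply/eqP => /(congr1 (@nat_of_ord _)); rewrite pv; apply/eqP.
Qed.

Section W.
Variables (R : realType) (n : nat).

Definition wv (r : edge n -> R) (a b : 'I_n) : R :=
  if [pick e : edge n | val e == [set a; b]] is Some e then r e else 1.

Lemma wE (r : edge n -> R) a b e : val e = [set a; b] -> wv r a b = r e.
Proof.
move=> He; rewrite /wv; case: pickP => [e' /eqP He'|/(_ e)].
  by congr r; apply: val_inj; rewrite He' He.
by rewrite He eqxx.
Qed.

Lemma big2 (M : {set edge n}) (f : edge n -> R) e1 e2 :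
  e1 \in M -> e2 \in M -> e1 != e2 ->
  \prod_(e in M) f e = f e1 * f e2 * \prod_(e in M | (e != e1) && (e != e2)) f e.
Proof.
move=> h1 h2 h12; rewrite (bigD1 e1) //= (bigD1 e2) /=; last by rewrite h2 eq_sym.
by rewrite mulrA; congr (_ * _); apply: eq_bigl => e; rewrite andbA.
Qed.

Lemma side (p q : 'I_n -> 'I_n) a b c d :
  invol p -> p a = b -> p c = d ->
  (forall v, v != a -> v != b -> v != c -> v != d -> q v = p v) ->
  forall e : edge n, e \in Mp p -> val e != [set a; b] -> val e != [set c; d] ->
  [&& e \in Mp q, val e != [set a; c] & val e != [set b; d]].
Proof.
move=> [pp _] pa pc hq e; rewrite inE => /existsP [v /eqP Hv] nab ncd.
have pb : p b = a by rewrite -pa pp.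
have pd : p d = c by rewrite -pc pp.
case: (eqVneq v a) => [va|va]; first by rewrite Hv va pa eqxx in nab.
case: (eqVneq v b) => [vb|vb]; first by rewrite Hv vb pb setUC eqxx in nab.
case: (eqVneq v c) => [vc|vc]; first by rewrite Hv vc pc eqxx in ncd.
case: (eqVneq v d) => [vd|vd]; first by rewrite Hv vd pd setUC eqxx in ncd.
have qv := hq v va vb vc vd.
have vin : v \in val e by rewrite Hv !inE eqxx.
apply/and3P; split.
- by rewrite inE; apply/existsP; exists v; rewrite Hv qv.
- apply/negP => /eqP h; move: vin; rewrite h !inE.
  by rewrite (negbTE va) (negbTE vc).
- apply/negP => /eqP h; move: vin; rewrite h !inE.
  by rewrite (negbTE vb) (negbTE vd).
Qed.

Lemma step (p : 'I_n -> 'I_n) x y : invol p -> x != y ->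
  exists p', [/\ invol p', p' x = y &
    forall z, z != y -> z != p x -> p z != y -> p z != p x -> p' z = p z].
Proof.
move=> hp xy; have [pp pn] := hp.
exists (fun v => tperm y (p x) (p (tperm y (p x) v))); split.
- exact: invol_cj.
- have yx : y != x by rewrite eq_sym.
  by rewrite (tpermD yx (pn x)) tpermR.
- move=> z h1 h2 h3 h4; rewrite eq_sym in h1; rewrite eq_sym in h2; rewrite eq_sym in h3; rewrite eq_sym in h4.
  by rewrite (tpermD h1 h2) (tpermD h3 h4).
Qed.

Lemma four (r : edge n -> R) : (forall e, 0 < r e) -> ~~ odd n ->
  (forall M, perfect_matching M -> \prod_(e in M) r e = 1) ->
  forall a b c d : 'I_n, a != b -> a != c -> a != d -> b != c -> b != d -> c != d ->
  wv r a b * wv r c d = wv r a c * wv r b d.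
Proof.
move=> rpos ev hM a b c d ab ac ad bc bd cd.
have n0 : (0 < n)%N := leq_ltn_trans (leq0n a) (ltn_ord a).
have [p0 hp0] := invol_base ev n0.
have [p1 [hp1 p1c _]] := step hp0 cd.
have [pp1 pn1] := hp1.
have [p [hp pa hpz]] := step hp1 ab.
have [pp pn] := hp.
have p1a_c : p1 a != c by apply/eqP => h; move/eqP: ad; apply; rewrite -p1c -h pp1.
have p1a_d : p1 a != d.
  apply/eqP => h; move/eqP: ac; apply.
  by rewrite -(pp1 c) p1c -h pp1.
have pc : p c = d.
  by rewrite hpz ?p1c // eq_sym ?bc ?bd //; apply/eqP => h; move/eqP: p1a_c; rewrite h.
pose q := fun v => tperm b c (p (tperm b c v)).
have hq : invol q := invol_cj b c hp.
have pb : p b = a by rewrite -pa pp.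
have pd : p d = c by rewrite -pc pp.
have ta : tperm b c a = a by rewrite tpermD // eq_sym.
have td : tperm b c d = d by rewrite tpermD // eq_sym.
have qa : q a = c by rewrite /q ta pa tpermL.
have qb : q b = d by rewrite /q tpermL pc td.
have hqp : forall v, v != a -> v != b -> v != c -> v != d -> q v = p v.
  move=> v va vb vc vd; rewrite /q (tpermD _ _ : tperm b c v = v) 1?eq_sym //.
  rewrite tpermD //.
    by apply/eqP => h; move/eqP: va; apply; rewrite -pb h pp.
  by apply/eqP => h; move/eqP: vd; apply; rewrite -pc h pp.
have hpq : forall v, v != a -> v != c -> v != b -> v != d -> p v = q v.
  by move=> v va vc vb vd; rewrite hqp.
have [eab Hab] := edge_ex ab.
have [ecd Hcd] := edge_ex cd.
have [eac Hac] := edge_ex ac.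
have [ebd Hbd] := edge_ex bd.
have iab : eab \in Mp p by rewrite inE; apply/existsP; exists a; rewrite Hab pa.
have icd : ecd \in Mp p by rewrite inE; apply/existsP; exists c; rewrite Hcd pc.
have iac : eac \in Mp q by rewrite inE; apply/existsP; exists a; rewrite Hac qa.
have ibd : ebd \in Mp q by rewrite inE; apply/existsP; exists b; rewrite Hbd qb.
have nv : forall e e' : edge n, (e != e') = (val e != val e') by [].
have n1 : eab != ecd.
  rewrite nv Hab Hcd; apply/negP => /eqP h.
  have : a \in [set c; d] by rewrite -h !inE eqxx.
  by rewrite !inE (negbTE ac) (negbTE ad).
have n2 : eac != ebd.
  rewrite nv Hac Hbd; apply/negP => /eqP h.
  have : a \in [set b; d] by rewrite -h !inE eqxx.
  by rewrite !inE (negbTE ab) (negbTE ad).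
have e1 := hM _ (perfect_Mp hp).
have e2 := hM _ (perfect_Mp hq).
rewrite (big2 _ iab icd n1) in e1.
rewrite (big2 _ iac ibd n2) in e2.
have eqP' : \prod_(e in Mp p | (e != eab) && (e != ecd)) r e =
            \prod_(e in Mp q | (e != eac) && (e != ebd)) r e.
  apply: eq_bigl => e; rewrite !nv Hab Hcd Hac Hbd.
  apply/idP/idP.
    by case/and3P => h h1 h2; apply: (side hp pa pc hqp h h1 h2).
  by case/and3P => h h1 h2; apply: (side hq qa qb hpq h h1 h2).
rewrite (wE r Hab) (wE r Hcd) (wE r Hac) (wE r Hbd).
apply: (mulIf (x := \prod_(e in Mp p | (e != eab) && (e != ecd)) r e)).
  by apply: lt0r_neq0; apply: prodr_gt0 => e _.
by rewrite e1 eqP' e2.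
Qed.
End W.

Lemma sq_eq (R : realType) (x y : R) : 0 < x -> 0 < y -> x ^+ 2 = y ^+ 2 -> x = y.
Proof. by move=> hx hy h; apply/eqP; rewrite -(@eqrXn2 _ 2) ?ltW // h. Qed.

Lemma lam_ex (R : realType) (n : nat) (w : 'I_n -> 'I_n -> R) (i0 i1 i2 : 'I_n) :
  i0 != i1 -> i0 != i2 -> i1 != i2 ->
  (forall a b, 0 < w a b) -> (forall a b, w a b = w b a) ->
  (forall a b c d, a != b -> a != c -> a != d -> b != c -> b != d -> c != d ->
     w a b * w c d = w a c * w b d) ->
  exists lam : {ffun 'I_n -> R}, posvec lam /\ forall a b, a != b -> w a b = lam a * lam b.
Proof.
move=> i01 i02 i12 wpos wsym H4.
have i10 : i1 != i0 by rewrite eq_sym.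
have i20 : i2 != i0 by rewrite eq_sym.
have i21 : i2 != i1 by rewrite eq_sym.
have A0 : w i0 i1 != 0 by apply: lt0r_neq0.
have B0 : w i0 i2 != 0 by apply: lt0r_neq0.
have C0 : w i1 i2 != 0 by apply: lt0r_neq0.
have E1 : forall v, v != i0 -> v != i1 -> v != i2 ->
    w i1 v = w i0 v * w i1 i2 / w i0 i2.
  move=> v v0 v1 v2.
  have h1 : w i1 v * w i0 i2 = w i1 i0 * w v i2 by apply: H4 => //; rewrite eq_sym.
  have h2 : w i0 v * w i1 i2 = w i0 i1 * w v i2 by apply: H4 => //; rewrite eq_sym.
  have h : w i1 v * w i0 i2 = w i0 v * w i1 i2 by rewrite h1 h2 wsym.
  by rewrite -h mulfK.
have E2 : forall v, v != i0 -> v != i1 -> v != i2 ->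
    w i2 v = w i0 v * w i1 i2 / w i0 i1.
  move=> v v0 v1 v2.
  have h1 : w i2 v * w i0 i1 = w i2 i0 * w v i1 by apply: H4 => //; rewrite eq_sym.
  have h2 : w i0 v * w i2 i1 = w i0 i2 * w v i1 by apply: H4 => //; rewrite eq_sym.
  have h : w i2 v * w i0 i1 = w i0 v * w i1 i2 by rewrite h1 [w i1 i2]wsym h2 wsym.
  by rewrite -h mulfK.
have E3 : forall v u, v != i0 -> v != i1 -> v != i2 -> u != i0 -> u != i1 -> u != i2 ->
    v != u -> w v u = w i0 v * w i1 u / w i0 i1.
  move=> v u v0 v1 v2 u0 u1 u2 vu.
  have h : w i0 v * w i1 u = w i0 i1 * w v u by apply: H4 => //; rewrite eq_sym.
  by rewrite h [w i0 i1 * _]mulrC mulfK.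
pose s0 := Num.sqrt (w i0 i1 * w i0 i2 / w i1 i2).
pose s1 := Num.sqrt (w i0 i1 * w i1 i2 / w i0 i2).
pose s2 := Num.sqrt (w i0 i2 * w i1 i2 / w i0 i1).
have s0p : 0 < s0 by rewrite sqrtr_gt0 divr_gt0 ?mulr_gt0.
have s1p : 0 < s1 by rewrite sqrtr_gt0 divr_gt0 ?mulr_gt0.
have s2p : 0 < s2 by rewrite sqrtr_gt0 divr_gt0 ?mulr_gt0.
pose lam := [ffun v => if v == i0 then s0 else if v == i1 then s1
                       else if v == i2 then s2 else w i0 v / s0].
have lpos : posvec lam.
  move=> v; rewrite ffunE; case: ifP => // _; case: ifP => // _; case: ifP => // _.
  exact: divr_gt0.
have Lsq : forall v, lam v ^+ 2 = if v == i0 then w i0 i1 * w i0 i2 / w i1 i2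
      else if v == i1 then w i0 i1 * w i1 i2 / w i0 i2
      else if v == i2 then w i0 i2 * w i1 i2 / w i0 i1
      else w i0 v ^+ 2 / (w i0 i1 * w i0 i2 / w i1 i2).
  move=> v; rewrite ffunE.
  case: ifP => _; first by rewrite sqr_sqrtr // ltW // divr_gt0 ?mulr_gt0.
  case: ifP => _; first by rewrite sqr_sqrtr // ltW // divr_gt0 ?mulr_gt0.
  case: ifP => _; first by rewrite sqr_sqrtr // ltW // divr_gt0 ?mulr_gt0.
  by rewrite expr_div_n sqr_sqrtr // ltW // divr_gt0 ?mulr_gt0.
exists lam; split => //.
pose rk (v : 'I_n) : nat := if v == i0 then 0 else if v == i1 then 1 else if v == i2 then 2 else 3.
have K : forall a b, a != b -> (rk a <= rk b)%N -> w a b = lam a * lam b.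
  move=> a b ab hr; apply: sq_eq; rewrite ?mulr_gt0 //.
  rewrite exprMn !Lsq; move: ab hr; rewrite /rk.
  case: (eqVneq a i0) => [->|a0]; try case: (eqVneq a i1) => [->|a1]; try case: (eqVneq a i2) => [->|a2];
  case: (eqVneq b i0) => [->|b0]; try case: (eqVneq b i1) => [->|b1]; try case: (eqVneq b i2) => [->|b2];
  rewrite ?eqxx ?(negbTE i01) ?(negbTE i02) ?(negbTE i12) ?(negbTE i10) ?(negbTE i20) ?(negbTE i21) /=;
  move=> h1 h2; try by [].
  - field; by rewrite ?A0 ?B0 ?C0.
  - field; by rewrite ?A0 ?B0 ?C0.
  - field; by rewrite ?A0 ?B0 ?C0.
  - field; by rewrite ?A0 ?B0 ?C0.
  - by rewrite E1 //; field; by rewrite ?A0 ?B0 ?C0.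
  - by rewrite E2 //; field; by rewrite ?A0 ?B0 ?C0.
  - by rewrite (E3 a b) // E1 //; field; by rewrite ?A0 ?B0 ?C0.
move=> a b ab; have [hr|hr] := leqP (rk a) (rk b); first exact: K.
by rewrite wsym mulrC K // 1?eq_sym // ltnW.
Qed.

Theorem theorem4p4 (R : realType) (n : nat) (hn4 : (4 <= n)%N) (hev : ~~ odd n)
  (D : {ffun edge n -> R} -> Prop)
  (hD : forall x, D x -> posvec x)
  (hinv : gamma_invariant D) :
  phi_fiber_invariant D.
Proof.
move=> x x' Dx px' hM.
have px := hD x Dx.
pose r := fun e => x' e / x e.
have rpos : forall e, 0 < r e by move=> e; apply: divr_gt0.
have rM : forall M, perfect_matching M -> \prod_(e in M) r e = 1.
  move=> M hMM; rewrite /r prodf_div.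
  have := hM M hMM; rewrite /xM => ->; rewrite divff //.
  by apply: lt0r_neq0; apply: prodr_gt0 => e _.
have h0 : (0 < n)%N by apply: leq_trans hn4.
have h1 : (1 < n)%N by apply: leq_trans hn4.
have h2 : (2 < n)%N by apply: leq_trans hn4.
pose i0 := Ordinal h0. pose i1 := Ordinal h1. pose i2 := Ordinal h2.
have wpos : forall a b, 0 < wv r a b.
  by move=> a b; rewrite /wv; case: pickP => [e _|_]; rewrite ?ltr01.
have wsym : forall a b, wv r a b = wv r b a by move=> a b; rewrite /wv setUC.
have [lam [lpos hlam]] := @lam_ex R n (wv r) i0 i1 i2 isT isT isT wpos wsym
   (four rpos hev rM).
suff -> : x' = gact lam x by apply: hinv.
apply/ffunP => e; rewrite ffunE.
have /cards2P [a [b [ab He]]] := valP e.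
rewrite He big_setU1 /= ?big_set1; last by rewrite inE.
rewrite -(hlam a b ab) (wE r He) /r divfK //.
exact: lt0r_neq0.
Qed.
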